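(* Let $d\ge 1$, $T\ge 1$, let $\mathcal{X}\subseteq\mathbb{R}^d$ be a non-empty closed convex set, and let $0<\mu\le L$. Let $f_1,\dots,f_T:\mathcal{X}\to[0,\infty)$ be differentiable with $\frac{\mu}{2}\|y-x\|^2\le f_t(y)-f_t(x)-\langle\nabla f_t(x),y-x\rangle\le\frac{L}{2}\|y-x\|^2$ for all $t$ and $x,y\in\mathcal{X}$. Let $C_{\mathcal{A}_o}$ be the quadratic-switching cost of the OMGD algorithm with $K=\lceil\frac{L+\mu}{2\mu}\ln4\rceil$ from a starting point $x_0\in\mathcal{X}$. Then for any $\alpha>0$, $$C_{\mathcal{A}_o}\le\sum_{t=1}^T f_t(x_t^\star)+\frac{1}{2\alpha}\sum_{t=1}^T\|\nabla f_t(x_t^\star)\|^2+(L+\alpha+5)\big(\|x_1-x_1^\star\|^2+2\mathcal{P}_{2,T}^\star\big),$$ where $x_1$ is the first OMGD iterate.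
   Context: $x_t^\star=\arg\min_{x\in\mathcal{X}}f_t(x)$ and $\mathcal{P}_{2,T}^\star=\sum_{t=2}^T\|x_t^\star-x_{t-1}^\star\|^2$. OMGD with parameter $K$: $x_1=x_0$; for $t=2,\dots,T$, $z_t^{(0)}=x_{t-1}$, $z_t^{(k)}=\Pi_{\mathcal{X}}\big(z_t^{(k-1)}-\frac1L\nabla f_{t-1}(z_t^{(k-1)})\big)$ ($k=1,\dots,K$), $x_t=z_t^{(K)}$, where $\Pi_{\mathcal{X}}$ is Euclidean projection onto $\mathcal{X}$. $C_{\mathcal{A}_o}=\sum_{t=1}^T\big(f_t(x_t)+\frac12\|x_t-x_{t-1}\|^2\big)$. *)

(* Defs.v *)
From HB Require Import structures.
From mathcomp Require Import all_boot all_order all_algebra.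
From mathcomp Require Import all_classical all_reals all_analysis.
Set Implicit Arguments. Unset Strict Implicit. Unset Printing Implicit Defensive.
Import Order.TTheory GRing.Theory Num.Theory numFieldNormedType.Exports.
Local Open Scope classical_set_scope.
Local Open Scope ring_scope.

Section Defs.
Variables (R : realType) (d : nat).
Notation V := 'rV[R]_d.

Definition dotp (u v : V) : R := \sum_(i < d) u 0 i * v 0 i.
Definition sqnorm (u : V) : R := dotp u u.

Definition is_convex_set (X : set V) : Prop :=
  forall x y, X x -> X y -> forall l : R, 0 <= l <= 1 ->
    X (l *: x + (1 - l) *: y).

Definition grad (f : V -> R) (x : V) : V :=
  \row_(i < d) ('d f x (delta_mx 0 i : V)).

Definition is_proj (X : set V) (y p : V) : Prop :=
  X p /\ forall z, X z -> sqnorm (y - p) <= sqnorm (y - z).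
Definition proj (X : set V) (y : V) : V := xget 0 [set p | is_proj X y p].

Definition is_argmin (X : set V) (f : V -> R) (x : V) : Prop :=
  X x /\ forall y, X y -> f x <= f y.
Definition argmin (X : set V) (f : V -> R) : V := xget 0 [set x | is_argmin X f x].

(* OMGD with K inner steps: x_0 = x_1 = x0, x_t = K projected gradient steps
   on f_{t-1} with step 1/L started from x_{t-1} (t >= 2). *)
Fixpoint omgd (X : set V) (f : nat -> V -> R) (L : R) (K : nat) (x0 : V)
  (t : nat) : V :=
  match t with
  | 0 => x0
  | 1 => x0
  | (s.+1 as t').+1 =>
      iter K (fun z => proj X (z - L^-1 *: grad (f t') z))
        (omgd X f L K x0 t')
  end.

Definition omgd_cost (X : set V) (f : nat -> V -> R) (L : R) (K : nat) (x0 : V)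
  (T : nat) : R :=
  \sum_(1 <= t < T.+1)
     (f t (omgd X f L K x0 t)
      + 2^-1 * sqnorm (omgd X f L K x0 t - omgd X f L K x0 t.-1)).

Definition path_len (X : set V) (f : nat -> V -> R) (T : nat) : R :=
  \sum_(2 <= t < T.+1) sqnorm (argmin X (f t) - argmin X (f t.-1)).

End Defs.

(* Main.v *)
Require Import Defs.
From HB Require Import structures.
From mathcomp Require Import all_boot all_order all_algebra.
From mathcomp Require Import all_classical all_reals all_analysis.
From mathcomp Require Import ring lra.
Import Order.TTheory GRing.Theory Num.Theory numFieldNormedType.Exports.
Local Open Scope classical_set_scope.
Local Open Scope ring_scope.

Section Aux.
Local Set Implicit Arguments.
Variables (R : realType) (d : nat).
Notation V := 'rV[R]_d.
Implicit Types u v w : V.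

Lemma dotpC u v : dotp u v = dotp v u.
Proof. by rewrite /dotp; apply: eq_bigr => i _; rewrite mulrC. Qed.
Lemma dotpDl u v w : dotp (u + v) w = dotp u w + dotp v w.
Proof. by rewrite /dotp -big_split; apply: eq_bigr => i _; rewrite mxE mulrDl. Qed.
Lemma dotpZl a u v : dotp (a *: u) v = a * dotp u v.
Proof. by rewrite /dotp mulr_sumr; apply: eq_bigr => i _; rewrite mxE mulrA. Qed.
Lemma dotpNl u v : dotp (- u) v = - dotp u v.
Proof. by rewrite -scaleN1r dotpZl mulN1r. Qed.
Lemma dotpBl u v w : dotp (u - v) w = dotp u w - dotp v w.
Proof. by rewrite dotpDl dotpNl. Qed.
Lemma dotpDr u v w : dotp w (u + v) = dotp w u + dotp w v.
Proof. by rewrite dotpC dotpDl !(dotpC w). Qed.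
Lemma dotpZr a u v : dotp v (a *: u) = a * dotp v u.
Proof. by rewrite dotpC dotpZl dotpC. Qed.
Lemma dotpNr u v : dotp v (- u) = - dotp v u.
Proof. by rewrite dotpC dotpNl dotpC. Qed.
Lemma dotpBr u v w : dotp w (u - v) = dotp w u - dotp w v.
Proof. by rewrite dotpDr dotpNr. Qed.
Lemma sqnorm_ge0 u : 0 <= sqnorm u.
Proof. by rewrite /sqnorm /dotp; apply: sumr_ge0 => i _; rewrite -expr2 sqr_ge0. Qed.
Lemma sqnormBZ u v l : sqnorm (u - l *: v) = sqnorm u - 2 * l * dotp u v + l ^+ 2 * sqnorm v.
Proof.
rewrite /sqnorm dotpBl !dotpBr !dotpZl !dotpZr (dotpC v u); ring.
Qed.
Lemma sqnormB u v : sqnorm (u - v) = sqnorm u - 2 * dotp u v + sqnorm v.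
Proof. by rewrite -[v in LHS]scale1r sqnormBZ expr1n mul1r mulr1. Qed.
Lemma sqnormN u : sqnorm (- u) = sqnorm u.
Proof. by rewrite /sqnorm dotpNl dotpNr opprK. Qed.
Lemma subBB u v w : (u - w) - (v - w) = u - v.
Proof. by rewrite opprB addrA subrK. Qed.

Lemma le0_small (a b : R) : 0 <= b -> (forall l, 0 < l <= 1 -> a <= l * b) -> a <= 0.
Proof.
move=> b0 H; rewrite leNgt; apply/negP => a0.
have l0 : 0 < a / (a + b) by rewrite divr_gt0 // ltr_wpDr.
have l1 : a / (a + b) <= 1 by rewrite ler_pdivrMr ?mul1r ?lerDl // ltr_wpDr.
have := H (a / (a + b)); rewrite l0 l1 => /(_ isT).
rewrite mulrAC ler_pdivlMr ?ltr_wpDr // => h.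
nra.
Qed.
Lemma vid1 (y p z : V) l : y - (l *: z + (1 - l) *: p) = (y - p) - l *: (z - p).
Proof. by apply/rowP => i; rewrite !mxE; ring. Qed.
Lemma vid2 (p z : V) l : l *: z + (1 - l) *: p - p = l *: (z - p).
Proof. by apply/rowP => i; rewrite !mxE; ring. Qed.

Lemma proj_vi (X : set V) y p z : is_convex_set X -> is_proj X y p -> X z ->
  dotp (y - p) (z - p) <= 0.
Proof.
move=> cX [Xp Hp] Xz.
apply: (@le0_small _ (sqnorm (z - p) / 2)); first by rewrite divr_ge0 ?sqnorm_ge0.
move=> l /andP[l0 l1].
have := Hp _ (cX _ _ Xz Xp l _); rewrite (ltW l0) l1 => /(_ isT).
rewrite vid1 sqnormBZ => h.
have q0 := sqnorm_ge0 (z - p).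
nra.
Qed.

Lemma argmin_opt (X : set V) (f : V -> R) (g : V -> V) L xs : is_convex_set X -> is_argmin X f xs ->
  (forall y, X y -> f y - f xs - dotp (g xs) (y - xs) <= L / 2 * sqnorm (y - xs)) ->
  0 <= L ->
  forall y, X y -> 0 <= dotp (g xs) (y - xs).
Proof.
move=> cX [Xs Hs] H L0 y Xy.
rewrite -oppr_le0.
apply: (@le0_small _ (L / 2 * sqnorm (y - xs))); first by rewrite mulr_ge0 ?divr_ge0 ?sqnorm_ge0.
move=> l /andP[l0 l1].
have Xw := cX _ _ Xy Xs l; rewrite (ltW l0) l1 in Xw; have {}Xw := Xw isT.
have := H _ Xw; have := Hs _ Xw.
rewrite vid2 dotpZr /sqnorm dotpZl dotpZr -/(sqnorm _) => h1 h2.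
have q0 := sqnorm_ge0 (y - xs).
nra.
Qed.
Definition sandwich (X : set V) (f : V -> R) (g : V -> V) mu L :=
  forall x y, X x -> X y ->
     mu / 2 * sqnorm (y - x) <= f y - f x - dotp (g x) (y - x)
     /\ f y - f x - dotp (g x) (y - x) <= L / 2 * sqnorm (y - x).

Lemma contract (X : set V) (f : V -> R) (g : V -> V) mu L xs z zp :
  is_convex_set X -> 0 < mu -> mu <= L -> sandwich X f g mu L ->
  is_argmin X f xs -> X z -> is_proj X (z - L^-1 *: g z) zp ->
  (L + mu) * sqnorm (zp - xs) <= (L - mu) * sqnorm (z - xs).
Proof.
move=> cX mu0 muL H hs Xz hp.
have L0 : 0 < L by apply: lt_le_trans muL.
have Xs := hs.1; have Xp := hp.1.
have opt := @argmin_opt X f g L xs cX hs (fun y Xy => (H _ _ Xs Xy).2) (ltW L0) _ Xp.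
have [h2 _] := H _ _ Xz Xs; have [_ h1] := H _ _ Xz Xp; have [h4 _] := H _ _ Xs Xp.
have h3 := @proj_vi X _ _ xs cX hp Xs.
have e1 : zp - z = (zp - xs) - (z - xs) by rewrite subBB.
have e2 : xs - z = - (z - xs) by rewrite opprB.
have e3 : z - L^-1 *: g z - zp = ((z - xs) - (zp - xs)) - L^-1 *: g z.
  by apply/rowP => i; rewrite !mxE; ring.
have e4 : xs - zp = - (zp - xs) by rewrite opprB.
rewrite e1 e2 in h1 h2; rewrite e3 e4 in h3.
move: h1 h2 h3 h4 opt.
move: (z - xs) (zp - xs) => u w.
rewrite !sqnormB sqnormN !dotpNr !dotpBr !dotpBl !dotpZl (dotpC w u).
set gw := dotp (g z) w; set gu := dotp (g z) u.
move=> h1 h2 h3 h4 opt.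
have h3' : gw <= L * (dotp u w - sqnorm w).
  have : L^-1 * gw <= dotp u w - sqnorm w by rewrite /sqnorm; lra.
  by rewrite -(ler_pM2l L0) mulrA mulfV ?mul1r // gt_eqF.
rewrite /sqnorm in h1 h2 h4 h3' *.
nra.
Qed.
Lemma coord_sq u i : u 0 i ^+ 2 <= sqnorm u.
Proof.
rewrite /sqnorm /dotp (bigD1 i) //= expr2 lerDl.
by apply: sumr_ge0 => j _; rewrite -expr2 sqr_ge0.
Qed.

Lemma cont_sum (F : 'I_d -> V -> R) : (forall i, continuous (F i)) ->
  continuous (fun z => \sum_(i < d) F i z).
Proof.
move=> cF.
suff H : forall s, continuous (fun z => \sum_(i <- s) F i z) by exact: H.
elim=> [|a s IH].
  have -> : (fun z => \sum_(i <- [::]) F i z) = fun _ => 0.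
    by apply: funext => z; rewrite big_nil.
  exact: cst_continuous.
have -> : (fun z => \sum_(i <- a :: s) F i z) = F a + (fun z => \sum_(i <- s) F i z).
  by apply: funext => z; rewrite big_cons.
by move=> x; apply: continuousD; [exact: cF | exact: IH].
Qed.

Lemma cont_sqnorm y : continuous (fun z : V => sqnorm (y - z)).
Proof.
rewrite /sqnorm /dotp.
have -> : (fun z : V => \sum_(i < d) (y - z) 0 i * (y - z) 0 i) =
          (fun z => \sum_(i < d) ((fun z : V => y 0 i - z 0 i) \* (fun z : V => y 0 i - z 0 i)) z).
  by apply: funext => z; apply: eq_bigr => i _; rewrite !mxE.
apply: cont_sum => i x.
have ci : {for x, continuous (fun z : V => y 0 i - z 0 i)}.
  apply: (@continuousB _ _ _ (fun=> y 0 i) (fun z : V => z 0 i)).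
    exact: cst_continuous.
  exact: coord_continuous.
exact: continuousM.
Qed.

Lemma exists_min (X : set V) (g : V -> R) c D : closed X -> X c ->
  (forall x, X x -> {for x, continuous g}) ->
  (forall z, X z -> g z <= g c -> sqnorm (z - c) <= D) ->
  exists x, is_argmin X g x.
Proof.
move=> clX Xc cg Hb.
pose B := [set v : V | forall i, `[c 0 i - (1 + D), c 0 i + (1 + D)]%classic (v ord0 i)].
have cB : compact B.
  by apply: (@rV_compact _ _ (fun i => `[c 0 i - (1 + D), c 0 i + (1 + D)]%classic)) => i;
     exact: segment_compact.
have cA : compact (B `&` X) by exact: compact_closedI.
have D0 : 0 <= D by apply: le_trans (Hb c Xc (lexx _)); exact: sqnorm_ge0.
have A0 : (B `&` X) !=set0.
  exists c; split => // i /=; rewrite in_itv /=; apply/andP; split; lra.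
have ct : {within B `&` X, continuous g}.
  apply: continuous_in_subspaceT => x /set_mem [_ Xx]; exact: cg.
have [x /set_mem [Bx Xx] xmin] := EVT_min_rV A0 cA ct.
have gxc : g x <= g c by apply: xmin; apply/mem_set; split => // i /=; rewrite in_itv /=; apply/andP; split; lra.
exists x; split => // y Xy.
have [gyc|gyc] := leP (g y) (g c); last by apply: le_trans gxc (ltW gyc).
apply: xmin; apply/mem_set; split => // i /=.
have := coord_sq (y - c) i; have := Hb _ Xy gyc; rewrite !mxE => h1 h2.
rewrite in_itv /=; apply/andP; split; nra.
Qed.
Lemma sqnorm0 : sqnorm (0 : V) = 0.
Proof. by rewrite /sqnorm /dotp big1 // => i _; rewrite mxE mul0r. Qed.

Lemma sqnorm_le2 u v : sqnorm (u - v) <= 2 * sqnorm u + 2 * sqnorm v.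
Proof.
have := sqnorm_ge0 (u - - v); rewrite !sqnormB sqnormN dotpNr.
lra.
Qed.

Lemma young u v (al : R) : 0 < al ->
  dotp u v <= (2 * al)^-1 * sqnorm u + al / 2 * sqnorm v.
Proof.
move=> al0.
have h := sqnorm_ge0 (u - al *: v); rewrite sqnormBZ in h.
have -> : (2 * al)^-1 * sqnorm u + al / 2 * sqnorm v =
          (2 * al)^-1 * (sqnorm u + al ^+ 2 * sqnorm v) by field; lra.
rewrite ler_pdivlMl ?mulr_gt0 //; lra.
Qed.

Lemma proj_spec (X : set V) y : closed X -> X !=set0 -> is_proj X y (Defs.proj X y).
Proof.
move=> clX [c Xc]; rewrite /Defs.proj; apply: xgetPex.
have hb : forall z, X z -> sqnorm (y - z) <= sqnorm (y - c) -> sqnorm (z - c) <= 4 * sqnorm (y - c).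
  move=> z Xz hz.
  have -> : z - c = (y - c) - (y - z) by apply/rowP => i; rewrite !mxE; ring.
  apply: le_trans (sqnorm_le2 _ _) _; lra.
have [x [Xx hx]] := @exists_min X (fun z => sqnorm (y - z)) c (4 * sqnorm (y - c)) clX Xc
  (fun x _ => @cont_sqnorm y x) hb.
by exists x; split.
Qed.

Lemma argmin_spec (X : set V) (f : V -> R) (g : V -> V) mu L : closed X -> X !=set0 ->
  0 < mu -> sandwich X f g mu L -> (forall x, X x -> {for x, continuous f}) ->
  is_argmin X f (argmin X f).
Proof.
move=> clX [c Xc] mu0 H cf; rewrite /argmin; apply: xgetPex.
apply: (@exists_min X f c (4 * sqnorm (g c) / mu ^+ 2) clX Xc cf).
move=> z Xz hz.
have [h _] := H _ _ Xc Xz.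
have h2 := sqnorm_ge0 (mu *: (z - c) - (-2) *: g c).
rewrite /sqnorm !dotpBl !dotpBr !dotpZl !dotpZr -!/(sqnorm _) (dotpC (z - c)) in h2.
rewrite ler_pdivlMr ?exprn_gt0 //.
move: h h2; set s := sqnorm (z - c); set a := sqnorm (g c); set b := dotp (g c) (z - c).
move=> h h2; nra.
Qed.

Lemma iter_contract (X : set V) (f : V -> R) (g : V -> V) mu L xs k z :
  closed X -> X !=set0 -> is_convex_set X -> 0 < mu -> mu <= L -> sandwich X f g mu L ->
  is_argmin X f xs -> X z ->
  X (iter k (fun z => Defs.proj X (z - L^-1 *: g z)) z) /\
  sqnorm (iter k (fun z => Defs.proj X (z - L^-1 *: g z)) z - xs)
    <= ((L - mu) / (L + mu)) ^+ k * sqnorm (z - xs).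
Proof.
move=> clX X0 cX mu0 muL H hs Xz.
have L0 : 0 < L by apply: lt_le_trans muL.
have r0 : 0 <= (L - mu) / (L + mu) by rewrite divr_ge0 ?subr_ge0 // ltW // addr_gt0.
elim: k => [|k [IH1 IH2]]; first by rewrite expr0 mul1r.
rewrite iterS; set zk := iter k _ z in IH1 IH2 *.
have hp := proj_spec (zk - L^-1 *: g zk) clX X0.
split; first exact: hp.1.
have := contract cX mu0 muL H hs IH1 hp.
rewrite exprS -mulrA => hc.
apply: le_trans (ler_wpM2l r0 IH2).
by rewrite mulrAC ler_pdivlMr ?addr_gt0 // mulrC.
Qed.
Lemma omgdS (X : set V) f L K x0 n :
  omgd X f L K x0 n.+2 =
  iter K (fun z => Defs.proj X (z - L^-1 *: grad (f n.+1) z)) (omgd X f L K x0 n.+1).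
Proof. by []. Qed.
End Aux.
Lemma rK (R : realType) (mu L : R) : 0 < mu -> mu <= L ->
  ((L - mu) / (L + mu)) ^+ `|Num.ceil ((L + mu) / (2 * mu) * ln 4)|%N <= 4^-1.
Proof.
move=> mu0 muL.
have L0 : 0 < L by apply: lt_le_trans muL.
have LM0 : 0 < L + mu by rewrite addr_gt0.
set c := (L + mu) / (2 * mu) * ln 4.
have c0 : 0 <= c by rewrite mulr_ge0 ?ln_ge0 ?divr_ge0 ?mulr_ge0 ?ltW //; lra.
have Kc : c <= (`|Num.ceil c|%N)%:R.
  rewrite natr_absz.
  by rewrite ger0_norm ?ceil_ge // ceil_ge0; lra.
set K := `|Num.ceil c|%N in Kc *.
have r0 : 0 <= (L - mu) / (L + mu) by rewrite divr_ge0 ?subr_ge0 // ltW.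
have re : (L - mu) / (L + mu) <= expR (- (2 * mu / (L + mu))).
  apply: le_trans (expR_ge1Dx _).
  have -> : (L - mu) / (L + mu) = 1 - 2 * mu / (L + mu) by field; lra.
  by [].
apply: le_trans (lerXn2r _ _ _ re) _; rewrite ?nnegrE ?expR_ge0 //.
rewrite -expRM_natl.
have -> : 4^-1 = expR (- ln 4) :> R by rewrite expRN lnK // posrE.
rewrite ler_expR.
have : ln 4 <= 2 * mu / (L + mu) * K%:R.
  move: Kc; rewrite /c => Kc.
  have -> : ln 4 = 2 * mu / (L + mu) * ((L + mu) / (2 * mu) * ln 4 :> R) by field; lra.
  by rewrite ler_wpM2l // divr_ge0 ?ltW //; lra.
lra.
Qed.
Lemma seq_bound (R : realType) (T : nat) (F Fs G a s p : nat -> R) (alpha L : R) :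
  (1 <= T)%N -> 0 <= alpha + L ->
  (forall t, (1 <= t <= T)%N -> 0 <= a t) ->
  (forall t, (2 <= t <= T)%N -> 0 <= p t) ->
  (forall t, (1 <= t < T)%N -> a t.+1 <= a t / 2 + 2 * p t.+1) ->
  (forall t, (1 <= t < T)%N -> s t.+1 <= 5 / 2 * a t) ->
  s 1%N = 0 ->
  (forall t, (1 <= t <= T)%N -> F t <= Fs t + G t + (alpha + L) / 2 * a t) ->
  \sum_(1 <= t < T.+1) (F t + 2^-1 * s t)
  <= \sum_(1 <= t < T.+1) Fs t + \sum_(1 <= t < T.+1) G t
     + (L + alpha + 5) * (a 1%N + 2 * \sum_(2 <= t < T.+1) p t).
Proof.
move=> T1 aL0 a0 p0 ha hs s1 hF.
pose S n := \sum_(1 <= t < n.+1) a t.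
pose P n := \sum_(2 <= t < n.+1) p t.
pose Q n := \sum_(1 <= t < n.+1) (F t + 2^-1 * s t) - \sum_(1 <= t < n.+1) Fs t
            - \sum_(1 <= t < n.+1) G t.
have key : forall n, (1 <= n <= T)%N ->
  S n + a n <= 2 * a 1%N + 4 * P n /\ Q n <= (alpha + L) / 2 * S n + 5 / 4 * (S n - a n)
  /\ 0 <= P n.
  elim=> [|n IH] //; move=> /andP[n1 nT].
  case: n IH n1 nT => [|n] IH _ nT.
    rewrite /S /P /Q !big_nat1 big_geq //.
    move: (hF 1%N); rewrite T1 => /(_ isT) h.
    rewrite s1; split; first lra. split; last lra. lra.
  have [I1 [I2 I3]] := IH (ltnW nT).
  have hn : (1 <= n.+1 < T)%N by rewrite ltn0Sn.
  have := ha _ hn; have := hs _ hn.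
  have := hF n.+2 (nT : (1 <= n.+2 <= T)%N).
  have := a0 n.+1 (ltnW nT : (1 <= n.+1 <= T)%N); have := a0 n.+2 nT.
  have := p0 n.+2 nT.
  rewrite /S /P /Q in I1 I2 I3 *.
  rewrite !(big_nat_recr n.+2) //=.
  move=> h1 h2 h3 h4 h5 h6.
  split; first lra. split; last lra. lra.
have := key T; rewrite T1 leqnn => /(_ isT) [I1 [I2 I3]].
have := a0 1%N; rewrite T1 => /(_ isT) a1.
have := a0 T; rewrite T1 leqnn => /(_ isT) aT.
rewrite /S /P /Q in I1 I2 I3.
move: I1 I2 I3 a1 aT.
set SS := \sum_(1 <= t < T.+1) a t.
set PP := \sum_(2 <= t < T.+1) p t.
move=> I1 I2 I3 a1 aT.
nra.
Qed.

Theorem lemma4 (R : realType) (d T : nat) (X : set 'rV[R]_d) (mu L : R)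
  (f : nat -> 'rV[R]_d -> R) (x0 : 'rV[R]_d) (alpha : R) :
  (1 <= d)%N -> (1 <= T)%N ->
  X !=set0 -> closed X -> Defs.is_convex_set X ->
  0 < mu -> mu <= L ->
  (forall t, (1 <= t <= T)%N -> forall x, X x -> differentiable (f t) x) ->
  (forall t, (1 <= t <= T)%N -> forall x, X x -> 0 <= f t x) ->
  (forall t, (1 <= t <= T)%N -> forall x y, X x -> X y ->
     mu / 2 * sqnorm (y - x) <= f t y - f t x - dotp (grad (f t) x) (y - x)
     /\ f t y - f t x - dotp (grad (f t) x) (y - x) <= L / 2 * sqnorm (y - x)) ->
  X x0 -> 0 < alpha ->
  let K := `|Num.ceil ((L + mu) / (2 * mu) * ln 4)|%N in
  let xs := fun t => argmin X (f t) in
  omgd_cost X f L K x0 T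
  <= \sum_(1 <= t < T.+1) f t (xs t)
     + (2 * alpha)^-1 * \sum_(1 <= t < T.+1) sqnorm (grad (f t) (xs t))
     + (L + alpha + 5) * (sqnorm (omgd X f L K x0 1%N - xs 1%N)
                          + 2 * path_len X f T).
Proof.
move=> d1 T1 X0 clX cX mu0 muL dif fpos H Xx0 al0; cbv zeta beta.
pose K := `|Num.ceil ((L + mu) / (2 * mu) * ln 4)|%N; fold K.
pose xs := fun t => argmin X (f t); rewrite -/(xs _).
have L0 : 0 < L by apply: lt_le_trans muL.
have sw : forall t, (1 <= t <= T)%N -> @sandwich R d X (f t) (grad (f t)) mu L.
  by move=> t ht; exact: H t ht.
have xsP : forall t, (1 <= t <= T)%N -> is_argmin X (f t) (xs t).
  move=> t ht; apply: (@argmin_spec _ _ X (f t) (grad (f t)) mu L clX X0 mu0 (sw t ht)).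
  by move=> x Xx; exact: differentiable_continuous (dif t ht x Xx).
have itX : forall (g : 'rV[R]_d -> 'rV[R]_d) k z, X z ->
    X (iter k (fun z => Defs.proj X (z - L^-1 *: g z)) z).
  move=> g; elim=> [|k IH] z Xz //=.
  exact: (proj_spec _ clX X0).1.
have xX : forall n, X (omgd X f L K x0 n).
  elim=> [|n IH] //; case: n IH => [|n] IH //.
  by rewrite omgdS; apply: itX.
have step : forall t, (1 <= t <= T)%N ->
    sqnorm (omgd X f L K x0 t.+1 - xs t) <= 4^-1 * sqnorm (omgd X f L K x0 t - xs t).
  move=> [|t] // ht; rewrite omgdS.
  have [_ h] := @iter_contract R d X (f t.+1) (grad (f t.+1)) mu L (xs t.+1) K _ clX X0 cX mu0 muL (sw _ ht) (xsP _ ht) (xX t.+1).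
  apply: le_trans h _; apply: ler_wpM2r; [exact: sqnorm_ge0 | exact: rK].
rewrite /omgd_cost /path_len mulr_sumr.
apply: (@seq_bound R T (fun t => f t (omgd X f L K x0 t)) (fun t => f t (xs t))
  (fun t => (2 * alpha)^-1 * sqnorm (grad (f t) (xs t)))
  (fun t => sqnorm (omgd X f L K x0 t - xs t))
  (fun t => sqnorm (omgd X f L K x0 t - omgd X f L K x0 t.-1))
  (fun t => sqnorm (xs t - xs t.-1)) alpha L).
- exact: T1.
- lra.
- by move=> t _; exact: sqnorm_ge0.
- by move=> t _; exact: sqnorm_ge0.
- move=> t /andP[t1 tT] /=.
  have ht : (1 <= t <= T)%N by rewrite t1 ltnW.
  have hst := step t ht.
  rewrite -(@subBB R d (omgd X f L K x0 t.+1) (xs t.+1) (xs t)).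
  apply: le_trans (@sqnorm_le2 R d _ _) _; lra.
- move=> t /andP[t1 tT] /=.
  have ht : (1 <= t <= T)%N by rewrite t1 ltnW.
  have hst := step t ht.
  have a0 := @sqnorm_ge0 R d (omgd X f L K x0 t - xs t).
  rewrite -(@subBB R d (omgd X f L K x0 t.+1) (omgd X f L K x0 t) (xs t)).
  apply: le_trans (@sqnorm_le2 R d _ _) _; lra.
- by rewrite /= subrr (@sqnorm0 R d).
- move=> t ht /=.
  have [_ h] := sw t ht (xs t) (omgd X f L K x0 t) (xsP t ht).1 (xX t).
  have y := @young R d (grad (f t) (xs t)) (omgd X f L K x0 t - xs t) alpha al0.
  lra.
Qed.
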